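(* Let $k \ge 1$ and $k \le m < 2k$. The number of biGrassmannian permutations of $[m]$ that avoid $\operatorname{id}_k = 12\cdots k$ is $\binom{2k-m+1}{3}$.
   Context: A permutation is Grassmannian if it has at most one descent (one-line notation); it is biGrassmannian if both it and its inverse are Grassmannian. A permutation avoids $12\cdots k$ if it has no increasing subsequence of length $k$. *)

(* Defs.v *)
(* Permutations of [m] are elements of 'S_m (perms of 'I_m = {0,..,m-1}),
   one-line notation s(0) s(1) ... s(m-1). *)
From mathcomp Require Import all_boot all_order all_fingroup.
Set Implicit Arguments. Unset Strict Implicit. Unset Printing Implicit Defensive.

Definition descents (m : nat) (s : 'S_m) : {set 'I_m} :=
  [set i : 'I_m | [exists j : 'I_m, (val j == (val i).+1) && (s j < s i)]].

Definition grassmannian (m : nat) (s : 'S_m) : bool := #|descents s| <= 1.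

Definition biGrassmannian (m : nat) (s : 'S_m) : bool :=
  grassmannian s && grassmannian s^-1.

Definition has_incr_subseq (k m : nat) (s : 'S_m) : bool :=
  [exists f : {ffun 'I_k -> 'I_m},
    [forall i : 'I_k, forall j : 'I_k, (i < j) ==> ((f i < f j) && (s (f i) < s (f j)))]].

Definition avoids_id (k m : nat) (s : 'S_m) : bool := ~~ has_incr_subseq k s.

(* Main.v *)
Require Import Defs.
From mathcomp Require Import all_boot all_order all_fingroup.
From mathcomp Require Import zify.
Set Implicit Arguments. Unset Strict Implicit. Unset Printing Implicit Defensive.

Definition wf (a c d i : nat) : nat :=
  if i < a then i else if i < a + c then i + d else if i < a + c + d then i - c else i.
Definition wg (m a c d i : nat) : nat := if a + c + d <= m then wf a c d i else i.

Ltac wsolve := rewrite /wg /wf; repeat (case: ifP => /=); move=> *; lia.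

Lemma wg_lt m a c d (i : 'I_m) : wg m a c d i < m.
Proof. have := ltn_ord i; wsolve. Qed.

Lemma wgK m a c d i : wg m a d c (wg m a c d i) = i.
Proof. wsolve. Qed.

Definition wfun m a c d (i : 'I_m) : 'I_m := Ordinal (wg_lt a c d i).

Lemma wfun_inj m a c d : injective (@wfun m a c d).
Proof.
apply: (can_inj (g := @wfun m a d c)) => i; apply: val_inj => /=; exact: wgK.
Qed.

Definition W m a c d : 'S_m := perm (@wfun_inj m a c d).

Lemma WE m a c d i : val (W m a c d i) = wg m a c d i.
Proof. by rewrite permE. Qed.

Lemma W_inv m a c d : ((W m a c d)^-1)%g = W m a d c.
Proof.
apply/permP => i; apply: (@perm_inj _ (W m a c d)); rewrite permKV.
apply: val_inj; by rewrite !WE wgK.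
Qed.

Definition invp m (s : 'S_m) (i j : 'I_m) := (i < j) && (s j < s i).

Lemma W_invset m a c d (i j : 'I_m) : a + c + d <= m ->
  invp (W m a c d) i j = (a <= i < a + c) && (a + c <= j < a + c + d).
Proof.
move=> h; rewrite /invp !WE.
have := ltn_ord i; have := ltn_ord j.
move: (val i) (val j) => x y.
rewrite /wg h /wf.
repeat (case: ifP => /=); move=> *; lia.
Qed.

Lemma sum_interval lo hi n : \sum_(i < n) ((lo <= i) && (i < hi)) = minn n hi - minn n lo.
Proof.
elim: n => [|n IH]; first by rewrite big_ord0 !min0n.
rewrite big_ord_recr /= IH.
case: (leqP lo n) => h; case: (ltnP n hi) => h2 /=; lia.
Qed.

Lemma card_interval m lo hi : hi <= m ->
  #|[set x : 'I_m | (lo <= x) && (x < hi)]| = hi - lo.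
Proof.
move=> h; rewrite -sum1_card big_mkcond /=.
rewrite (eq_bigr (fun i : 'I_m => nat_of_bool ((lo <= i) && (i < hi)))); last first.
  by move=> i _; rewrite inE; case: (_ && _).
rewrite sum_interval; lia.
Qed.

Lemma card_below m (s : 'S_m) (i : 'I_m) : #|[set j | s j < s i]| = s i.
Proof.
have -> : [set j | s j < s i] = s @^-1: [set x : 'I_m | (0 <= x) && (x < s i)].
  by apply/setP => j; rewrite !inE.
rewrite card_preimset; last exact: perm_inj.
by rewrite card_interval ?subn0 // ltnW.
Qed.

Lemma lt_inv m (s : 'S_m) (i j : 'I_m) :
  (s j < s i) = ((j < i) && ~~ invp s j i) || ((i < j) && invp s i j).
Proof.
rewrite /invp; case: (ltngtP j i) => h /=.
- rewrite ltn_neqAle orbF -leqNgt.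
  have -> : (s j != s i) by apply/eqP => /perm_inj E; move: h; rewrite E ltnn.
  by [].
- by [].
- have -> : j = i by apply: val_inj. by rewrite ltnn.
Qed.

Lemma perm_inv_eq m (s w : 'S_m) : (forall i j, invp s i j = invp w i j) -> s = w.
Proof.
move=> H; apply/permP => i; apply: val_inj.
rewrite /= -(card_below s i) -(card_below w i); apply: eq_card => j; rewrite !inE.
by rewrite !lt_inv !H.
Qed.

Lemma desc_exists m (s : 'S_m) (i : 'I_m) : forall n (j : 'I_m), (j : nat) = n -> i < j -> s j < s i ->
  exists2 l : 'I_m, l \in descents s & (i <= l) && (l < j).
Proof.
elim=> [|n IH] j hj hij hs; first by rewrite hj in hij.
have hn : n < m by have := ltn_ord j; lia.
pose j' := Ordinal hn.
case: (ltnP (s j) (s j')) => h.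
  exists j'; last by rewrite hj /=; lia.
  by rewrite inE; apply/existsP; exists j; rewrite /= hj eqxx h.
have hneq : s j' != s j by apply/eqP => /perm_inj /(congr1 (@nat_of_ord m)) /=; lia.
have h2 : s j' < s i by move: hneq h hs; rewrite -(inj_eq val_inj) /=; lia.
case: (ltngtP i n) => hin.
- have [l hl1 hl2] := IH j' erefl hin h2. exists l => //; rewrite /j' /= in hl2; lia.
- lia.
- have : j' = i by apply: val_inj. by move=> E; rewrite E ltnn in h2.
Qed.

Lemma desc_ex m (s : 'S_m) (i j : 'I_m) : invp s i j ->
  exists2 l : 'I_m, l \in descents s & (i <= l) && (l < j).
Proof. by case/andP => h1 h2; exact: (desc_exists erefl h1 h2). Qed.

Lemma init_seg (P : pred nat) B : (forall n n', n' <= n -> P n -> P n') ->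
  (forall n, P n -> n < B) -> exists a, a <= B /\ forall n, P n = (n < a).
Proof.
move=> Hd; elim: B => [|B IH] Hb.
  by exists 0; split=> // n; apply/negbTE/negP => /Hb.
case hB: (P B).
  exists B.+1; split=> // n; apply/idP/idP => [/Hb //|]; rewrite ltnS => h.
  exact: Hd h hB.
have [a [ha Ha]] : exists a, a <= B /\ forall n, P n = (n < a).
  apply: IH => n hn; have := Hb n hn; rewrite ltnS leq_eqVlt; case/orP => // /eqP E.
  by rewrite E hB in hn.
by exists a; split=> //; apply: leqW.
Qed.

Lemma desc0_id m (s : 'S_m) : descents s = set0 -> s = 1%g.
Proof.
move=> h; apply: perm_inv_eq => i j.
have -> : invp (1%g : 'S_m) i j = false.
  by rewrite /invp !perm1; apply/negbTE; apply/negP => /andP[h1 h2]; lia.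
apply/negbTE/negP => /desc_ex [l]; by rewrite h inE.
Qed.

Lemma one_desc m (s : 'S_m) : grassmannian s -> s != 1%g -> exists p, descents s = [set p].
Proof.
rewrite /grassmannian leq_eqVlt ltnS leqn0; case/orP => [/cards1P [p hp] | /eqP/cards0_eq h] ns.
  by exists p.
by rewrite (desc0_id h) eqxx in ns.
Qed.

Lemma mono_side m (s : 'S_m) (p : nat) (x x' : 'I_m) :
  (forall i j, invp s i j -> (i <= p) && (p < j)) -> x' <= x -> (x <= p) || (p < x') ->
  s x' <= s x.
Proof.
move=> K hle hside; rewrite leqNgt; apply/negP => hlt.
have hne : x' != x by apply/eqP => E; rewrite E ltnn in hlt.
have hlt' : x' < x by rewrite ltn_neqAle hle andbT; exact: hne.
have := K x' x; rewrite /invp hlt' hlt => /(_ isT); lia.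
Qed.

Lemma biG_shape m (s : 'S_m) : biGrassmannian s -> s != 1%g ->
  exists a c d, [/\ 0 < c, 0 < d, a + c + d <= m & s = W m a c d].
Proof.
case/andP => gs gi ns.
have [p hp] := one_desc gs ns.
have nsi : (s^-1)%g != 1%g.
  by apply: contra ns => /eqP E; rewrite -[s]invgK E invg1.
have [v hv] := one_desc gi nsi.
have K1 : forall i j, invp s i j -> (i <= p) && (p < j).
  by move=> i j /desc_ex [l]; rewrite hp inE => /eqP ->.
have K2 : forall i j, invp s i j -> (s j <= v) && (v < s i).
  move=> i j /andP [h1 h2].
  have : invp (s^-1)%g (s j) (s i) by rewrite /invp !permK h1 h2.
  by case/desc_ex => l; rewrite hv inE => /eqP ->.
have K : forall i j, invp s i j = (i <= p < j) && (s j <= v < s i).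
  move=> i j; apply/idP/idP => [h|/andP [/andP[h1 h2] /andP[h3 h4]]].
    by rewrite K1 // K2.
  rewrite /invp; apply/andP; split; lia.
have [q hq1 hq2] : exists2 q : 'I_m, nat_of_ord q = p.+1 & s q < s p.
  have : p \in descents s by rewrite hp inE.
  by rewrite inE => /existsP [q /andP [/eqP E h]]; exists q.
have hpq : invp s p q by rewrite /invp hq1 ltnSn hq2.
have /andP [hqv hpv] := K2 _ _ hpq.
pose P := fun n => [exists x : 'I_m, [&& nat_of_ord x == n, x <= p & s x <= v]].
have [a [ha Ha]] : exists a, a <= p.+1 /\ forall n, P n = (n < a).
  apply: init_seg.
    move=> n n' hnn /existsP [x /and3P [/eqP E h1 h2]].
    have hn' : n' < m by have := ltn_ord x; lia.
    apply/existsP; exists (Ordinal hn'); apply/and3P; split => //=; first lia.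
    apply: leq_trans h2; apply: (mono_side K1) => /=; lia.
  by move=> n /existsP [x /and3P [/eqP E h1 h2]]; lia.
have Pi : forall i : 'I_m, i <= p -> (s i <= v) = (i < a).
  move=> i hi; rewrite -Ha; apply/idP/existsP => [h|[x /and3P [/eqP E h1 h2]]].
    by exists i; rewrite eqxx hi h.
  by have -> : i = x by apply: val_inj.
pose Q := fun n => [exists x : 'I_m, (nat_of_ord x == p.+1 + n) && (s x <= v)].
have [d [hd Hd]] : exists d, d <= m /\ forall n, Q n = (n < d).
  apply: init_seg.
    move=> n n' hnn /existsP [x /andP [/eqP E h2]].
    have hn' : p.+1 + n' < m by have := ltn_ord x; lia.
    apply/existsP; exists (Ordinal hn'); apply/andP; split => //=.
    apply: leq_trans h2; apply: (mono_side K1) => /=; lia.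
  by move=> n /existsP [x /andP [/eqP E h2]]; have := ltn_ord x; lia.
have Qj : forall j : 'I_m, p < j -> (s j <= v) = (j - p.+1 < d).
  move=> j hj; rewrite -Hd; apply/idP/existsP => [h|[x /andP [/eqP E h2]]].
    by exists j; rewrite h andbT; apply/eqP; lia.
  by have -> : j = x by apply: val_inj => /=; lia.
have hap : a <= p.
  have := Pi p (leqnn p).
  move: hpv; rewrite ltnNge => /negbTE -> ; lia.
have hd0 : 0 < d.
  by have := Qj q; rewrite hq1 ltnSn hqv subnn => /(_ isT).
have hm : p.+1 + d <= m.
  have : Q d.-1 by rewrite Hd; lia.
  by case/existsP => x /andP [/eqP E _]; have := ltn_ord x; lia.
exists a, (p.+1 - a), d; split; [lia | lia | lia |].
apply: perm_inv_eq => i j.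
rewrite W_invset; last lia.
rewrite K.
case hi : (i <= p); case hj : (p < j) => /=; try lia.
rewrite (ltnNge v) (Pi i) // (Qj j) //; lia.
Qed.

Lemma noinv_lt m (s : 'S_m) (x y : 'I_m) : x < y -> ~~ invp s x y -> s x < s y.
Proof.
move=> h; rewrite /invp h /= -leqNgt => hle; rewrite ltn_neqAle hle andbT.
apply/negP => /eqP /val_inj /perm_inj E; by rewrite E ltnn in h.
Qed.

Lemma sorted_enum_set m (S : {set 'I_m}) : sorted (fun x y : 'I_m => x < y) (enum S).
Proof.
rewrite /enum_mem -enumT; apply: sorted_filter; first by move=> x y z; apply: ltn_trans.
have : sorted ltn (map val (enum 'I_m)) by rewrite val_enum_ord iota_ltn_sorted.
by rewrite sorted_map.
Qed.

Lemma incr_set k m (s : 'S_m) (S : {set 'I_m}) (x0 : 'I_m) : k <= #|S| ->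
  {in S &, forall x y : 'I_m, x < y -> s x < s y} -> has_incr_subseq k s.
Proof.
move=> hk hS; apply/existsP; exists [ffun i : 'I_k => nth x0 (enum S) i].
apply/forallP => i; apply/forallP => j; apply/implyP => hij; rewrite !ffunE.
have hi : i < size (enum S) by rewrite -cardE; apply: leq_trans hk.
have hj : j < size (enum S) by rewrite -cardE; apply: leq_trans hk.
have tr : transitive (fun x y : 'I_m => x < y) by move=> y x z; apply: ltn_trans.
have hlt := sorted_ltn_nth tr x0 (sorted_enum_set S) i j hi hj hij.
rewrite hlt /=; apply: hS => //; by rewrite -mem_enum; apply: mem_nth.
Qed.

Lemma card_compl_int m lo hi : hi <= m ->
  #|~: [set x : 'I_m | (lo <= x) && (x < hi)]| = m - (hi - lo).
Proof.
move=> h; have := cardsC [set x : 'I_m | (lo <= x) && (x < hi)].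
rewrite card_ord card_interval //; lia.
Qed.

Lemma W_avoids m a c d k : a + c + d <= m -> m - k < c -> m - k < d ->
  avoids_id k (W m a c d).
Proof.
move=> hm hc hd; apply/negP => /existsP [f /forallP H].
have Hf : forall i j : 'I_k, i < j -> (f i < f j) && (W m a c d (f i) < W m a c d (f j)).
  by move=> i j hij; have /forallP /(_ j) := H i; rewrite hij.
have finj : injective f.
  move=> i j E; apply: val_inj; case: (ltngtP i j) => // hij.
    by have := Hf _ _ hij; rewrite E ltnn.
  by have := Hf _ _ hij; rewrite E ltnn.
pose C := [set x : 'I_m | (a <= x) && (x < a + c)].
pose D := [set x : 'I_m | (a + c <= x) && (x < a + c + d)].
have hcase : (forall i, f i \notin C) \/ (forall i, f i \notin D).
  case: (boolP [exists i, f i \in C]) => [/existsP [i hi]|/existsPn hn]; [right|by left].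
  move=> j; apply/negP => hj.
  have hinv : invp (W m a c d) (f i) (f j).
    rewrite W_invset //; move: hi hj; rewrite !inE => -> ->; by [].
  move: hinv; rewrite /invp => /andP [h1 h2].
  case: (ltngtP i j) => hij.
  - by have := Hf _ _ hij => /andP [_ h3]; lia.
  - by have := Hf _ _ hij => /andP [h3 _]; lia.
  - have E : i = j by apply: val_inj.
    by rewrite E ltnn in h1.
have hcard : #|[set f i | i in 'I_k]| = k by rewrite card_imset // card_ord.
case: hcase => hn.
- have : [set f i | i in 'I_k] \subset ~: C.
    by apply/subsetP => x /imsetP [i _ ->]; rewrite inE hn.
  move/subset_leq_card; rewrite hcard card_compl_int; lia.
- have : [set f i | i in 'I_k] \subset ~: D.
    by apply/subsetP => x /imsetP [i _ ->]; rewrite inE hn.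
  move/subset_leq_card; rewrite hcard card_compl_int; lia.
Qed.

Lemma W_incr m a c d k (x0 : 'I_m) : k <= m -> a + c + d <= m -> (c <= m - k) || (d <= m - k) ->
  has_incr_subseq k (W m a c d).
Proof.
move=> hkm hm; case/orP => h.
- apply: (@incr_set _ _ _ (~: [set x : 'I_m | (a <= x) && (x < a + c)]) x0).
    rewrite card_compl_int; lia.
  move=> x y; rewrite !inE => hx hy hxy; apply: noinv_lt => //.
  rewrite W_invset //; lia.
- apply: (@incr_set _ _ _ (~: [set x : 'I_m | (a + c <= x) && (x < a + c + d)]) x0).
    rewrite card_compl_int; lia.
  move=> x y; rewrite !inE => hx hy hxy; apply: noinv_lt => //.
  rewrite W_invset //; lia.
Qed.

Lemma W_grass m a c d : a + c + d <= m -> grassmannian (W m a c d).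
Proof.
move=> hm; apply/card_le1_eqP => x y; rewrite !inE.
move=> /existsP [x' /andP [/eqP ex hx]] /existsP [y' /andP [/eqP ey hy]].
have ix : invp (W m a c d) x x' by rewrite /invp ex ltnSn hx.
have iy : invp (W m a c d) y y' by rewrite /invp ey ltnSn hy.
rewrite W_invset // in ix; rewrite W_invset // in iy.
rewrite /= in ex ey; apply: val_inj; rewrite /=; lia.
Qed.

Lemma W_biG m a c d : a + c + d <= m -> biGrassmannian (W m a c d).
Proof.
move=> hm; rewrite /biGrassmannian W_grass //= W_inv W_grass //; lia.
Qed.

Ltac wcase := rewrite /wf; repeat (case: ifP => /=); move=> *; lia.

Lemma W_inj m a c d a' c' d' : 0 < c -> 0 < d -> 0 < c' -> 0 < d' ->
  a + c + d <= m -> a' + c' + d' <= m -> W m a c d = W m a' c' d' ->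
  [/\ a = a', c = c' & d = d'].
Proof.
move=> hc hd hc' hd' hm hm' E.
have F : forall i, i < m -> wf a c d i = wf a' c' d' i.
  move=> i hi; have := congr1 (fun s : 'S_m => nat_of_ord (s (Ordinal hi))) E.
  by rewrite /= !WE /wg hm hm'.
have ha : a = a'.
  case: (ltngtP a a') => h //.
  - have := F a ltac:(lia); wcase.
  - have := F a' ltac:(lia); wcase.
subst a'.
have hcc : c = c'.
  case: (ltngtP c c') => h //.
  - have := F (a + c) ltac:(lia); wcase.
  - have := F (a + c') ltac:(lia); wcase.
subst c'.
split => //.
case: (ltngtP d d') => h //.
- have := F (a + c + d) ltac:(lia); wcase.
- have := F (a + c + d') ltac:(lia); wcase.
Qed.

Lemma sum_tri B r : r <= B -> \sum_(x < B) (r - x) = 'C(r.+1, 2).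
Proof.
elim: B r => [|B IH] r hr.
  by rewrite big_ord0; move: hr; rewrite leqn0 => /eqP ->.
rewrite big_ord_recl /=.
rewrite (eq_bigr (fun i : 'I_B => r.-1 - i)); last by move=> i _; rewrite /bump /=; lia.
rewrite IH; last lia.
case: r hr => [|r] hr /=; first by [].
by rewrite (binS r.+1 1) bin1 addnC.
Qed.

Lemma sum_hockey B N : N < B -> \sum_(a < B) 'C((N.+1 - a).+1, 2) = 'C(N.+3, 3).
Proof.
elim: B N => [|B IH] N hN; first by [].
rewrite big_ord_recl /=.
case: N hN => [|N] hN.
  rewrite big1; first by [].
  move=> i _; rewrite /bump /=.
  by have -> : 1 - (1 + i) = 0 by lia.
rewrite (eq_bigr (fun i : 'I_B => 'C((N.+1 - i).+1, 2))); last first.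
  by move=> i _; rewrite /bump /=; congr ('C(_, _)); lia.
rewrite IH; last lia.
by rewrite subn0 (binS N.+3 2) addnC.
Qed.

Lemma count_T m t :
  #|[set q : 'I_m.+1 * ('I_m.+1 * 'I_m.+1) | q.1 + q.2.1 + q.2.2 + 2 * t <= m]| =
  if 2 * t <= m then 'C((m - 2 * t).+3, 3) else 0.
Proof.
rewrite -sum1_card big_mkcond /=.
rewrite (eq_bigr (fun q : 'I_m.+1 * ('I_m.+1 * 'I_m.+1) =>
   nat_of_bool (q.1 + q.2.1 + q.2.2 + 2 * t <= m))); last first.
  by move=> q _; rewrite inE; case: (_ <= _).
rewrite -(pair_bigA _ (fun (a : 'I_m.+1) (p : 'I_m.+1 * 'I_m.+1) =>
   nat_of_bool (a + p.1 + p.2 + 2 * t <= m))) /=.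
under eq_bigr => a _ do rewrite -(pair_bigA _ (fun (x y : 'I_m.+1) =>
   nat_of_bool (a + x + y + 2 * t <= m))) /=.
case: ifP => h2t; last first.
  rewrite big1 // => a _; rewrite big1 // => x _; rewrite big1 // => y _.
  by have -> : (a + x + y + 2 * t <= m) = false by lia.
set N := m - 2 * t.
under eq_bigr => a _.
  under eq_bigr => x _.
    rewrite (eq_bigr (fun y : 'I_m.+1 => nat_of_bool ((0 <= y) && (y < N.+1 - (a + x))))); last first.
      by move=> y _; congr nat_of_bool; rewrite /N; lia.
    rewrite sum_interval.
    have -> : minn m.+1 (N.+1 - (a + x)) - minn m.+1 0 = (N.+1 - a) - x by rewrite /N; lia.
  over.
  rewrite sum_tri; last by rewrite /N; lia.
over.
by rewrite /= sum_hockey // /N; lia.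
Qed.

Theorem theorem5p2 (k m : nat) :
  1 <= k -> k <= m -> m < 2 * k ->
  #|[set s : 'S_m | biGrassmannian s && avoids_id k s]| = 'C(2 * k - m + 1, 3).
Proof.
move=> hk hkm hm2.
have hm0 : 0 < m by lia.
pose x0 := Ordinal hm0.
pose t := m - k + 1.
pose Phi := fun q : 'I_m.+1 * ('I_m.+1 * 'I_m.+1) => W m q.1 (q.2.1 + t) (q.2.2 + t).
pose T := [set q : 'I_m.+1 * ('I_m.+1 * 'I_m.+1) | q.1 + q.2.1 + q.2.2 + 2 * t <= m].
have -> : [set s : 'S_m | biGrassmannian s && avoids_id k s] = Phi @: T.
  apply/setP => s; rewrite inE; apply/idP/imsetP.
  - case/andP => hb hav.
    have ns : s != 1%g.
      apply/eqP => E; move: hav; rewrite E /avoids_id; apply/negP; rewrite negbK.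
      apply: (@incr_set _ _ _ setT x0); first by rewrite cardsT card_ord.
      by move=> x y _ _; rewrite !perm1.
    have [a [c [d [hc hd hacd Es]]]] := biG_shape hb ns; subst s.
    have hct : t <= c.
      case: (leqP t c) => // h.
      have : has_incr_subseq k (W m a c d) by apply: W_incr => //; apply/orP; left; lia.
      by move=> hi; rewrite /avoids_id hi in hav.
    have hdt : t <= d.
      case: (leqP t d) => // h.
      have : has_incr_subseq k (W m a c d) by apply: W_incr => //; apply/orP; right; lia.
      by move=> hi; rewrite /avoids_id hi in hav.
    exists (inord a, (inord (c - t), inord (d - t))).
      rewrite inE /= !inordK; lia.
    rewrite /Phi /= !inordK; try lia.
    by rewrite !subnK.
  - case=> q hq ->; rewrite inE /= in hq.
    rewrite /Phi W_biG /=; last lia.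
    apply: W_avoids; lia.
rewrite card_in_imset; last first.
  move=> [a [x y]] [a' [x' y']]; rewrite !inE /= => h1 h2 E.
  have [e1 e2 e3] := W_inj (m := m) (a := a) (c := x + t) (d := y + t) (a' := a') (c' := x' + t) (d' := y' + t)
     ltac:(lia) ltac:(lia) ltac:(lia) ltac:(lia) ltac:(lia) ltac:(lia) E.
  have -> : a = a' by apply: val_inj.
  have -> : x = x' by apply: val_inj => /=; lia.
  by have -> : y = y' by apply: val_inj => /=; lia.
rewrite count_T; case: ifP => h.
  congr 'C(_, _); lia.
by rewrite bin_small //; lia.
Qed.
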